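(* Let $A$ be a unital $C^*$-algebra with a strongly continuous action $\sigma$ of $S^1$, let $\mathcal A\subseteq A$ be a norm-dense unital $*$-subalgebra, $B$ a unital $C^*$-algebra, $\beta_i:\mathcal A\to B$ a unital algebra homomorphism, $\beta_{-i}(a):=\beta_i(a^* )^*$, and $L_\beta:\mathcal A\to[0,\infty)$ a slip-norm. Suppose: (a) $P_0(\mathcal A)\subseteq\mathcal A$ and there exist $\zeta_1^R,\dots,\zeta_k^R,\zeta_1^L,\dots,\zeta_m^L\in\mathcal A\cap A_1$ with $\sum_j\zeta_j^R(\zeta_j^R)^*=1=\sum_j(\zeta_j^L)^*\zeta_j^L$; (b) $L_\beta(ab)\le L_\beta(a)\|\beta_i(b)\|+\|\beta_{-i}(a)\|L_\beta(b)$ for all $a,b\in\mathcal A$, and the restriction of $\beta_i$ to $\mathcal A\cap A_0$ extends to a unital $*$-homomorphism $A_0\to B$. Then for every $n\in\mathbb Z$ and every $y\in\mathcal A_n:=\mathcal A\cap A_n$ there is a constant $C_y\ge0$ such that $L_\beta(y^*x)\le C_y\cdot(L_\beta(x)+\|x\|)$ for all $x\in\mathcal A_n$.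
   Context: $A_n:=\{a\in A:\sigma_\lambda(a)=\lambda^na\ \forall\lambda\in S^1\}$, $P_0(a):=\frac1{2\pi}\int_0^{2\pi}\sigma_{e^{it}}(a)dt$. A slip-norm is a seminorm $L$ with $L(1)=0$ and $L(a^* )=L(a)$. *)

(* Defs.v *)
From HB Require Import structures.
From mathcomp Require Import all_boot all_order all_algebra.
From mathcomp Require Import all_classical all_reals all_analysis.
From mathcomp Require Import complex.

Set Implicit Arguments.
Unset Strict Implicit.
Unset Printing Implicit Defensive.

Import Order.TTheory GRing.Theory Num.Theory.
Import numFieldNormedType.Exports.
Local Open Scope ring_scope.
Local Open Scope classical_set_scope.

(* The carrier is a real Banach space
   (completeNormedModType R, real-valued norm); the complex structure is
   given by the operator cs_J (multiplication by i), so that complex scaling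
   is (a + i b).x := a x + b (J x). *)

Record CstarAlgebra (R : realType) := {
  cs_car :> completeNormedModType R;
  cs_J : cs_car -> cs_car;
  cs_mul : cs_car -> cs_car -> cs_car;
  cs_one : cs_car;
  cs_star : cs_car -> cs_car;
  cs_J_add : forall x y, cs_J (x + y) = cs_J x + cs_J y;
  cs_J_scale : forall (r : R) x, cs_J (r *: x) = r *: cs_J x;
  cs_JJ : forall x, cs_J (cs_J x) = - x;
  cs_norm_cscale : forall (a b : R) x,
      `|a *: x + b *: cs_J x| = Num.sqrt (a ^+ 2 + b ^+ 2) * `|x|;
  cs_mulDl : forall x y z, cs_mul (x + y) z = cs_mul x z + cs_mul y z;
  cs_mulDr : forall x y z, cs_mul x (y + z) = cs_mul x y + cs_mul x z;
  cs_mulZl : forall (r : R) x y, cs_mul (r *: x) y = r *: cs_mul x y;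
  cs_mulZr : forall (r : R) x y, cs_mul x (r *: y) = r *: cs_mul x y;
  cs_mulJl : forall x y, cs_mul (cs_J x) y = cs_J (cs_mul x y);
  cs_mulJr : forall x y, cs_mul x (cs_J y) = cs_J (cs_mul x y);
  cs_mulA : forall x y z, cs_mul x (cs_mul y z) = cs_mul (cs_mul x y) z;
  cs_mul1l : forall x, cs_mul cs_one x = x;
  cs_mul1r : forall x, cs_mul x cs_one = x;
  cs_norm_mul : forall x y, `|cs_mul x y| <= `|x| * `|y|;
  cs_starD : forall x y, cs_star (x + y) = cs_star x + cs_star y;
  cs_starZ : forall (r : R) x, cs_star (r *: x) = r *: cs_star x;
  cs_starJ : forall x, cs_star (cs_J x) = - cs_J (cs_star x);
  cs_starK : forall x, cs_star (cs_star x) = x;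
  cs_starM : forall x y, cs_star (cs_mul x y) = cs_mul (cs_star y) (cs_star x);
  cs_Cstar : forall x, `|cs_mul (cs_star x) x| = `|x| ^+ 2
}.

Arguments cs_J {R A} : rename.
Arguments cs_mul {R A} : rename.
Arguments cs_one {R} A : rename.
Arguments cs_star {R A} : rename.

Definition cscale (R : realType) (A : CstarAlgebra R) (c : R[i]) (x : A) : A :=
  let: Complex a b := c in a *: (x : cs_car A) + b *: (cs_J x : cs_car A).

Definition cabs (R : realType) (c : R[i]) : R := ComplexField.Normc.normc c.

Definition S1 (R : realType) : set R[i] := [set l | cabs l = 1].

Definition expi (R : realType) (t : R) : R[i] := Complex (cos t) (sin t).

Definition is_unital_star_hom_on (R : realType) (A B : CstarAlgebra R)
    (D : set A) (f : A -> B) : Prop :=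
  [/\ forall x y, D x -> D y -> f (x + y) = f x + f y,
      forall c x, D x -> f (cscale c x) = cscale c (f x),
      forall x y, D x -> D y -> f (cs_mul x y) = cs_mul (f x) (f y),
      forall x, D x -> f (cs_star x) = cs_star (f x)
    & f (cs_one A) = cs_one B].

Definition strongly_continuous_circle_action (R : realType) (A : CstarAlgebra R)
    (sigma : R[i] -> A -> A) : Prop :=
  [/\ forall l, S1 l -> is_unital_star_hom_on setT (sigma l),
      forall x, sigma 1 x = x,
      forall l m x, S1 l -> S1 m -> sigma (l * m) x = sigma l (sigma m x)
    & forall x, continuous (fun t : R => sigma (expi t) x)].

Definition spectral_subspace (R : realType) (A : CstarAlgebra R)
    (sigma : R[i] -> A -> A) (n : int) : set A :=
  [set a | forall l, S1 l -> sigma l a = cscale (l ^ n) a].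

(* P_0(a) = (1/2pi) \int_0^{2pi} sigma_{e^{it}}(a) dt, written as the limit of
   the (left, uniform) Riemann sums of the continuous integrand. *)
Definition P0 (R : realType) (A : CstarAlgebra R) (sigma : R[i] -> A -> A)
    (a : A) : A :=
  lim ((fun N : nat =>
          (N.+1%:R : R)^-1 *:
            \sum_(k < N.+1) sigma (expi (2 * pi * k%:R / N.+1%:R)) a) @ \oo).

Definition is_unital_star_subalgebra (R : realType) (A : CstarAlgebra R)
    (S : set A) : Prop :=
  [/\ S (cs_one A),
      forall x y, S x -> S y -> S (x + y),
      forall c x, S x -> S (cscale c x),
      forall x y, S x -> S y -> S (cs_mul x y)
    & forall x, S x -> S (cs_star x)].

Definition is_unital_alg_hom_on (R : realType) (A B : CstarAlgebra R)
    (D : set A) (f : A -> B) : Prop :=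
  [/\ forall x y, D x -> D y -> f (x + y) = f x + f y,
      forall c x, D x -> f (cscale c x) = cscale c (f x),
      forall x y, D x -> D y -> f (cs_mul x y) = cs_mul (f x) (f y)
    & f (cs_one A) = cs_one B].

Definition is_slip_norm_on (R : realType) (A : CstarAlgebra R)
    (D : set A) (L : A -> R) : Prop :=
  [/\ forall x, D x -> 0 <= L x,
      forall x y, D x -> D y -> L (x + y) <= L x + L y,
      forall c x, D x -> L (cscale c x) = cabs c * L x,
      L (cs_one A) = 0
    & forall x, D x -> L (cs_star x) = L x].

Definition beta_minus (R : realType) (A B : CstarAlgebra R) (beta : A -> B)
    (a : A) : B := cs_star (beta (cs_star a)).

(* Main.v *)
Require Import Defs.
From HB Require Import structures.
From mathcomp Require Import all_boot all_order all_algebra.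
From mathcomp Require Import all_classical all_reals all_analysis.
From mathcomp Require Import complex.
From mathcomp Require Import ring lra.

Require Import Defs.
Set Implicit Arguments.
Unset Strict Implicit.
Unset Printing Implicit Defensive.
Import Order.TTheory GRing.Theory Num.Theory.
Import numFieldNormedType.Exports.
Local Open Scope ring_scope.
Local Open Scope classical_set_scope.
Section Basics.
Variables (R : realType) (A : CstarAlgebra R).
Local Notation m := (@cs_mul R A).
Local Notation st := (@cs_star R A).
Local Notation J := (@cs_J R A).

Lemma mul0l (x : A) : m 0 x = 0.
Proof. by have := cs_mulZl 0 (0:A) x; rewrite !scale0r. Qed.
Lemma mul0r (x : A) : m x 0 = 0.
Proof. by have := cs_mulZr 0 x (0:A); rewrite !scale0r. Qed.
Lemma mulNl (x y : A) : m (- x) y = - m x y.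
Proof. by rewrite -scaleN1r cs_mulZl scaleN1r. Qed.
Lemma mulNr (x y : A) : m x (- y) = - m x y.
Proof. by rewrite -scaleN1r cs_mulZr scaleN1r. Qed.
Lemma mulBl (x y z : A) : m (x - y) z = m x z - m y z.
Proof. by rewrite cs_mulDl mulNl. Qed.
Lemma mulBr (x y z : A) : m x (y - z) = m x y - m x z.
Proof. by rewrite cs_mulDr mulNr. Qed.
Lemma star0 : st 0 = 0.
Proof. by have := cs_starZ 0 (0:A); rewrite !scale0r. Qed.
Lemma starN (x : A) : st (- x) = - st x.
Proof. by rewrite -scaleN1r cs_starZ scaleN1r. Qed.
Lemma starB (x y : A) : st (x - y) = st x - st y.
Proof. by rewrite cs_starD starN. Qed.
Lemma star1 : st (cs_one A) = cs_one A.
Proof.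
have h : st (cs_one A) = m (st (cs_one A)) (cs_one A) by rewrite cs_mul1r.
have := congr1 st h; rewrite cs_starK cs_starM cs_starK => e.
by rewrite [RHS]e cs_mul1r.
Qed.
Lemma norm_mul (x y : A) : `|m x y| <= `|x| * `|y|.
Proof. exact: cs_norm_mul. Qed.
Lemma norm_star_le (x : A) : `|x| <= `|st x|.
Proof.
have [->|x0] := eqVneq x 0; first by rewrite normr0.
have hx : 0 < `|x| by rewrite normr_gt0.
have := cs_Cstar x => e.
have : `|x| ^+ 2 <= `|st x| * `|x| by rewrite -e; exact: norm_mul.
by rewrite expr2 ler_pM2r.
Qed.
Lemma norm_star (x : A) : `|st x| = `|x|.
Proof.
apply/le_anti/andP; split; last exact: norm_star_le.
by rewrite -{2}(cs_starK x); exact: norm_star_le.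
Qed.
Lemma norm_J (x : A) : `|J x| = `|x|.
Proof.
have := cs_norm_cscale 0 1 x.
by rewrite scale0r add0r scale1r expr0n /= expr1n add0r sqrtr1 mul1r.
Qed.
Lemma norm_one : `|cs_one A| <= 1.
Proof.
have := cs_Cstar (cs_one A); rewrite star1 cs_mul1l expr2 => e.
have [->|h] := eqVneq `|cs_one A| 0; first by [].
have : `|cs_one A| * 1 = `|cs_one A| * `|cs_one A| by rewrite mulr1 -e.
by move/mulfI => /(_ h) <-.
Qed.
Lemma cscale_real (r : R) (x : A) : cscale (Complex r 0) x = r *: x.
Proof. by rewrite /cscale scale0r addr0. Qed.
Lemma J_N (x : A) : J (- x) = - J x.
Proof. by rewrite -scaleN1r cs_J_scale scaleN1r. Qed.
Lemma J_B (x y : A) : J (x - y) = J x - J y.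
Proof. by rewrite cs_J_add J_N. Qed.
Lemma J_0 : J 0 = 0.
Proof. by have := cs_J_scale 0 (0:A); rewrite !scale0r. Qed.

Lemma cscale_mull c (x y : A) : m (cscale c x) y = cscale c (m x y).
Proof. by case: c => a b; rewrite /cscale cs_mulDl !cs_mulZl cs_mulJl. Qed.
Lemma cscale_mulr c (x y : A) : m x (cscale c y) = cscale c (m x y).
Proof. by case: c => a b; rewrite /cscale cs_mulDr !cs_mulZr cs_mulJr. Qed.
Lemma cscale_comp c d (x : A) : cscale c (cscale d x) = cscale (c * d) x.
Proof.
case: c => a b; case: d => p q; rewrite /cscale /=.
rewrite !cs_J_add !cs_J_scale cs_JJ !scalerDr !scalerA.
rewrite scalerBl scalerDl scalerN -!addrA; congr (_ + _).
by rewrite [LHS]addrA [LHS]addrC.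
Qed.
Lemma cscale_star c (x : A) : st (cscale c x) = cscale (conjc c) (st x).
Proof.
case: c => a b; rewrite /cscale /= cs_starD !cs_starZ cs_starJ.
by rewrite scalerN scaleNr.
Qed.
Lemma cscale1 (x : A) : cscale 1 x = x.
Proof. by rewrite /cscale /= scale1r scale0r addr0. Qed.
End Basics.
Section Geo.
Variable R : realType.
Lemma geo_small (C e : R) : 0 < e -> exists N : nat, C * (2^-1) ^+ N < e.
Proof.
move=> e0.
have [C0|C0] := leP C 0.
  exists 0%N; rewrite expr0 mulr1; exact: le_lt_trans C0 e0.
pose N := Num.truncn (C / e).
exists N.
have h1 : C / e < N.+1%:R by exact: truncnS_gt.
have h2 : (N.+1%:R : R) <= 2 ^+ N.
  rewrite -natrX ler_nat; exact: ltn_expl.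
have h3 : (2^-1 : R) ^+ N = (2 ^+ N)^-1 by rewrite exprVn.
rewrite h3.
have p2 : (0 : R) < 2 ^+ N by rewrite exprn_gt0.
rewrite -ltr_pdivlMr ?invr_gt0 // invrK.
have : C / e * e < N.+1%:R * e by rewrite ltr_pM2r.
rewrite mulfVK ?gt_eqF // => h.
apply: lt_le_trans h _; rewrite mulrC ler_pM2l //.
Qed.

Lemma eq0_geo (x C : R) : (forall n : nat, x <= C * (2^-1) ^+ n) -> x <= 0.
Proof.
move=> h; rewrite leNgt; apply/negP => x0.
have [N hN] := geo_small C x0.
by have := le_lt_trans (h N) hN; rewrite ltxx.
Qed.
End Geo.

Section Sqrt.
Variables (R : realType) (A : CstarAlgebra R) (k : A).
Hypothesis hk : `|k| <= 2^-1.
Local Notation m := (@cs_mul R A).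
Local Notation st := (@cs_star R A).

Fixpoint ys (n : nat) : A :=
  if n is n'.+1 then 2^-1 *: (k + m (ys n') (ys n')) else 0.

Lemma half_ge0 : (0 : R) <= 2^-1. Proof. by rewrite invr_ge0 ler0n. Qed.

Lemma ys_le n : `|ys n| <= 2^-1.
Proof.
elim: n => [|n IH] /=; first by rewrite normr0 half_ge0.
rewrite normrZ ger0_norm ?half_ge0 //.
have h : `|k + m (ys n) (ys n)| <= 2^-1 + 2^-1 * 2^-1.
  apply: le_trans (ler_normD _ _) _; apply: lerD => //.
  apply: le_trans (norm_mul _ _) _.
  by apply: ler_pM => //; rewrite normr_ge0.
apply: le_trans (ler_wpM2l half_ge0 h) _.
lra.
Qed.

Lemma msq_diff (a b : A) : m a a - m b b = m a (a - b) + m (a - b) b.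
Proof. by rewrite mulBr mulBl addrA subrK. Qed.

Lemma norm_msq_diff (a b : A) : `|a| <= 2^-1 -> `|b| <= 2^-1 ->
  `|m a a - m b b| <= `|a - b|.
Proof.
move=> ha hb; rewrite msq_diff.
apply: le_trans (ler_normD _ _) _.
have e1 : `|m a (a - b)| <= 2^-1 * `|a - b|.
  apply: le_trans (norm_mul _ _) _; apply: ler_wpM2r => //; exact: normr_ge0.
have e2 : `|m (a - b) b| <= `|a - b| * 2^-1.
  apply: le_trans (norm_mul _ _) _; apply: ler_wpM2l => //; exact: normr_ge0.
apply: le_trans (lerD e1 e2) _.
by rewrite mulrC -mulrDr -[X in _ <= X]mulr1 ler_wpM2l ?normr_ge0 // -div1r; rewrite -splitr.
Qed.

Lemma ys_diff n : `|ys n.+1 - ys n| <= (2^-1) ^+ n.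
Proof.
elim: n => [|n IH].
  by rewrite expr0 subr0; apply: le_trans (ys_le 1) _; rewrite invf_le1 ?ler1n.
have -> : ys n.+2 - ys n.+1 = 2^-1 *: (m (ys n.+1) (ys n.+1) - m (ys n) (ys n)).
  have e : ys n.+2 - ys n.+1 = 2^-1 *: (k + m (ys n.+1) (ys n.+1)) - 2^-1 *: (k + m (ys n) (ys n)) by [].
  by rewrite e -scalerBr opprD addrACA subrr add0r.
rewrite normrZ ger0_norm ?half_ge0 // exprS.
apply: ler_wpM2l; first exact: half_ge0.
apply: le_trans (norm_msq_diff (ys_le _) (ys_le _)) IH.
Qed.

Lemma ysS n : ys n.+1 = 2^-1 *: (k + m (ys n) (ys n)).
Proof. by []. Qed.

Lemma ys_cauchy0 n p : `|ys (n + p) - ys n| <= 2 * (2^-1) ^+ n - 2 * (2^-1) ^+ (n + p).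
Proof.
elim: p => [|p IH]; first by rewrite addn0 !subrr normr0.
rewrite addnS.
have e : ys (n + p).+1 - ys n = (ys (n + p).+1 - ys (n + p)) + (ys (n + p) - ys n).
  by rewrite addrA subrK.
rewrite e; apply: le_trans (ler_normD _ _) _.
have h := ys_diff (n + p).
rewrite exprS.
set q := (2^-1) ^+ (n + p) in h IH *.
lra.
Qed.

Lemma ys_cauchy n p : (n <= p)%N -> `|ys p - ys n| <= 2 * (2^-1) ^+ n.
Proof.
move=> np; rewrite -(subnKC np).
apply: le_trans (ys_cauchy0 n (p - n)) _.
rewrite lerBlDr lerDl mulr_ge0 // exprn_ge0 //; exact: half_ge0.
Qed.

Lemma ys_cvg : cvgn ys.
Proof.
apply/cauchy_cvgP; apply: cauchy_exP => e e0.
have [N hN] := geo_small 2 e0.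
exists (ys N); exists N => // p /= hp.
rewrite -ball_normE /ball_ /=.
apply: le_lt_trans hN.
by rewrite distrC; exact: ys_cauchy.
Qed.

Definition yl := limn ys.

Lemma yl_approx n : `|yl - ys n| <= 2 * (2^-1) ^+ n.
Proof.
apply/ler_addgt0Pr => e e0.
have := cvgr_dist_lt _ _ ys_cvg e e0 => -[N _ HN].
have hp := HN (maxn N n) (leq_maxl N n).
have e1 : yl - ys n = (yl - ys (maxn N n)) + (ys (maxn N n) - ys n).
  by rewrite addrA subrK.
rewrite e1; apply: le_trans (ler_normD _ _) _.
rewrite addrC; apply: lerD; last exact: ltW.
exact: ys_cauchy (leq_maxr N n).
Qed.

Lemma eq_geo (a b : A) (C : R) : (forall n, `|a - b| <= C * (2^-1) ^+ n) -> a = b.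
Proof.
move=> h; apply/eqP; rewrite -subr_eq0 -normr_le0.
exact: eq0_geo h.
Qed.

Lemma yl_le : `|yl| <= 2^-1.
Proof.
rewrite -subr_le0; apply: (@eq0_geo _ _ 2) => n.
rewrite lerBlDl.
have e : yl = ys n + (yl - ys n) by rewrite addrC subrK.
rewrite [X in `|X|]e; apply: le_trans (ler_normD _ _) _.
apply: lerD; [exact: ys_le | exact: yl_approx].
Qed.

Lemma yl_fix : yl = 2^-1 *: (k + m yl yl).
Proof.
apply: (@eq_geo _ _ 4) => n.
have e : yl - 2^-1 *: (k + m yl yl) =
  (yl - ys n.+1) + 2^-1 *: (m (ys n) (ys n) - m yl yl).
  by rewrite ysS scalerBr !scalerDr -addrA; congr (_ + _); rewrite !opprD -addrA addKr.
rewrite e; apply: le_trans (ler_normD _ _) _.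
rewrite normrZ ger0_norm ?half_ge0 //.
have h1 := yl_approx n.+1.
have h2 := norm_msq_diff (ys_le n) yl_le.
rewrite [`|ys n - yl|]distrC in h2.
have h3 := yl_approx n.
rewrite exprS in h1.
have h4 : 2^-1 * `|m (ys n) (ys n) - m yl yl| <= 2^-1 * (2 * (2^-1) ^+ n).
  apply: ler_wpM2l; first exact: half_ge0.
  exact: le_trans h2 h3.
set q := (2^-1) ^+ n in h1 h3 h4 *.
have q0 : 0 <= q by rewrite exprn_ge0 // half_ge0.
lra.
Qed.

Lemma yl_sq : m yl yl = yl + yl - k.
Proof.
have e : yl + yl = k + m yl yl.
  have h2 : (2^-1 + 2^-1 : R) = 1 by lra.
  by rewrite {1 2}yl_fix -scalerDl h2 scale1r.
by rewrite e addrC addKr.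
Qed.

Lemma ys_star : st k = k -> forall n, st (ys n) = ys n.
Proof.
move=> hs; elim=> [|n IH]; first exact: star0.
by rewrite ysS cs_starZ cs_starD cs_starM IH hs.
Qed.

Lemma yl_star : st k = k -> st yl = yl.
Proof.
move=> hs; apply: (@eq_geo _ _ 4) => n.
have e : st yl - yl = st (yl - ys n) + (ys n - yl).
  by rewrite starB ys_star // addrA subrK.
rewrite e; apply: le_trans (ler_normD _ _) _.
rewrite norm_star [`|ys n - yl|]distrC.
have := yl_approx n; set q := _ ^+ n => h; lra.
Qed.

Lemma ys_comm (c : A) : m k c = m c k -> forall n, m (ys n) c = m c (ys n).
Proof.
move=> hc; elim=> [|n IH]; first by rewrite mul0l mul0r.
rewrite ysS cs_mulZl cs_mulZr cs_mulDl cs_mulDr hc; congr (_ *: (_ + _)).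
by rewrite -cs_mulA IH cs_mulA IH -cs_mulA.
Qed.

Lemma yl_comm (c : A) : m k c = m c k -> m yl c = m c yl.
Proof.
move=> hc; apply/eqP; rewrite -subr_eq0; apply/eqP.
apply: (@eq_geo _ _ (4 * `|c|)) => n; rewrite subr0.
have e : m yl c - m c yl = m (yl - ys n) c + m c (ys n - yl).
  by rewrite mulBl mulBr ys_comm // addrA subrK.
rewrite e; apply: le_trans (ler_normD _ _) _.
have h1 := norm_mul (yl - ys n) c.
have h2 := norm_mul c (ys n - yl).
rewrite [`|ys n - yl|]distrC in h2.
have h3 := yl_approx n.
have c0 : 0 <= `|c| by rewrite normr_ge0.
have h4 : `|yl - ys n| * `|c| <= (2 * (2^-1) ^+ n) * `|c| by rewrite ler_wpM2r.
set q := (2^-1) ^+ n in h3 h4 *.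
nra.
Qed.

Section Map.
Variables (g : A -> A) (G : R).
Hypotheses (G0 : 0 <= G) (gD : forall x y, g (x + y) = g x + g y)
  (gZ : forall (r : R) x, g (r *: x) = r *: g x)
  (gM : forall x y, g (m x y) = m (g x) (g y))
  (gb : forall x, `|g x| <= G * `|x|) (gk : g k = k).

Lemma g0 : g 0 = 0.
Proof. by have := gZ 0 0; rewrite !scale0r. Qed.
Lemma gB x y : g (x - y) = g x - g y.
Proof. by rewrite gD -scaleN1r gZ scaleN1r. Qed.

Lemma ys_map n : g (ys n) = ys n.
Proof.
elim: n => [|n IH]; first exact: g0.
by rewrite ysS gZ gD gM IH gk.
Qed.

Lemma yl_map : g yl = yl.
Proof.
apply: (@eq_geo _ _ (2 * G + 2)) => n.
have e : g yl - yl = g (yl - ys n) + (ys n - yl).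
  by rewrite gB ys_map addrA subrK.
rewrite e; apply: le_trans (ler_normD _ _) _.
have h1 := gb (yl - ys n).
rewrite [`|ys n - yl|]distrC.
have h3 := yl_approx n.
have h4 : G * `|yl - ys n| <= G * (2 * (2^-1) ^+ n) by rewrite ler_wpM2l.
set q := (2^-1) ^+ n in h3 h4 *.
nra.
Qed.
End Map.

Definition sq := cs_one A - yl.

Lemma sq_sq : m sq sq = cs_one A - k.
Proof.
rewrite /sq mulBl !mulBr !cs_mul1l !cs_mul1r yl_sq.
have e : yl - (yl + yl - k) = k - yl.
  by rewrite opprB opprD addrCA addNKr.
by rewrite e opprB addrA subrK.
Qed.

Lemma sq_star : st k = k -> st sq = sq.
Proof. by move=> h; rewrite /sq starB star1 yl_star. Qed.

Lemma sq_comm (c : A) : m k c = m c k -> m sq c = m c sq.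
Proof. by move=> h; rewrite /sq mulBl mulBr cs_mul1l cs_mul1r yl_comm. Qed.

Lemma sq_map (g : A -> A) (G : R) : 0 <= G ->
  (forall x y, g (x + y) = g x + g y) ->
  (forall (r : R) x, g (r *: x) = r *: g x) ->
  (forall x y, g (m x y) = m (g x) (g y)) ->
  (forall x, `|g x| <= G * `|x|) -> g k = k -> g (cs_one A) = cs_one A ->
  g sq = sq.
Proof.
move=> G0 gD gZ gM gb gk g1.
by rewrite /sq gB // g1 (yl_map G0 gD gZ gM gb gk).
Qed.
End Sqrt.

Section Bound.
Variables (R : realType) (A B : CstarAlgebra R) (D : set A) (f : A -> B).
Local Notation mA := (@cs_mul R A).
Local Notation mB := (@cs_mul R B).
Local Notation stA := (@cs_star R A).
Local Notation stB := (@cs_star R B).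
Hypothesis hf : is_unital_star_hom_on D f.
Hypotheses (D1 : D (cs_one A)) (DD : forall x y, D x -> D y -> D (x + y))
  (DZ : forall c x, D x -> D (cscale c x)) (DM : forall x y, D x -> D y -> D (mA x y))
  (DS : forall x, D x -> D (stA x))
  (Dsq : forall k, `|k| <= 2^-1 -> stA k = k -> D k -> D (sq k)).

Lemma DR (r : R) x : D x -> D (r *: x).
Proof. by move=> h; rewrite -cscale_real; exact: DZ. Qed.
Lemma DN x : D x -> D (- x).
Proof. by move=> h; rewrite -scaleN1r; exact: DR. Qed.
Lemma DB x y : D x -> D y -> D (x - y).
Proof. by move=> hx hy; apply: DD => //; exact: DN. Qed.

Lemma fD x y : D x -> D y -> f (x + y) = f x + f y.
Proof. by case: hf => h _ _ _ _; exact: h. Qed.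
Lemma fR (r : R) x : D x -> f (r *: x) = r *: f x.
Proof. by case: hf => _ h _ _ _ hx; rewrite -!cscale_real h. Qed.
Lemma fM x y : D x -> D y -> f (mA x y) = mB (f x) (f y).
Proof. by case: hf => _ _ h _ _; exact: h. Qed.
Lemma fS x : D x -> f (stA x) = stB (f x).
Proof. by case: hf => _ _ _ h _; exact: h. Qed.
Lemma f1 : f (cs_one A) = cs_one B.
Proof. by case: hf. Qed.
Lemma fN x : D x -> f (- x) = - f x.
Proof. by move=> hx; rewrite -scaleN1r fR // scaleN1r. Qed.
Lemma fB x y : D x -> D y -> f (x - y) = f x - f y.
Proof. by move=> hx hy; rewrite fD ?fN //; exact: DN. Qed.

Lemma norm_double (V : normedModType R) (v : V) : `|v + v| = 2 * `|v|.
Proof. by rewrite -mulr2n -scaler_nat normrZ ger0_norm. Qed.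

Lemma bound_sa k : D k -> stA k = k -> `|k| <= 2^-1 -> `|f k| <= 2.
Proof.
move=> Dk sk nk.
have nk' : `|- k| <= 2^-1 by rewrite normrN.
have sk' : stA (- k) = - k by rewrite starN sk.
have Dk' : D (- k) := DN Dk.
set s1 := sq k; set s2 := sq (- k).
have D1s : D s1 := Dsq nk sk Dk.
have D2s : D s2 := Dsq nk' sk' Dk'.
have c2 : mA s2 k = mA k s2.
  apply: (sq_comm nk'); by rewrite mulNl mulNr.
have c12 : mA s1 s2 = mA s2 s1 by apply: (sq_comm nk).
have e1 : mA s1 s1 = cs_one A - k := sq_sq nk.
have e2 : mA s2 s2 = cs_one A - - k := sq_sq nk'.
set v1 := f s1; set v2 := f s2.
have sv1 : stB v1 = v1 by rewrite /v1 -fS // sq_star.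
have sv2 : stB v2 = v2 by rewrite /v2 -fS // sq_star.
have cv : mB v1 v2 = mB v2 v1 by rewrite /v1 /v2 -!fM // c12.
have ev1 : mB v1 v1 = f (cs_one A - k) by rewrite /v1 -fM // e1.
have ev2 : mB v2 v2 = f (cs_one A - - k) by rewrite /v2 -fM // e2.
set z := v1 + cs_J v2.
have sz : stB z = v1 - cs_J v2 by rewrite /z cs_starD cs_starJ sv1 sv2.
have zz : mB (stB z) z = cs_one B + cs_one B.
  rewrite sz /z cs_mulDr !mulBl !cs_mulJl !cs_mulJr cs_JJ cv.
  have -> : mB v1 v1 - cs_J (mB v2 v1) + (cs_J (mB v2 v1) - - mB v2 v2)
           = mB v1 v1 + mB v2 v2.
    by rewrite opprK addrA subrK.
  rewrite ev1 ev2 -fD; try (apply: DB => //; exact: DN).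
  have -> : cs_one A - k + (cs_one A - - k) = cs_one A + cs_one A.
    by rewrite opprK addrACA addNr addr0.
  by rewrite fD // f1.
have nz : `|z| ^+ 2 <= 2.
  rewrite -cs_Cstar zz; apply: le_trans (ler_normD _ _) _.
  have := norm_one B; lra.
have nv1 : `|v1| <= `|z|.
  have e : v1 + v1 = z + stB z by rewrite sz /z addrACA subrr addr0.
  have := ler_normD z (stB z); rewrite -e norm_star norm_double; lra.
have nv2 : `|v2| <= `|z|.
  have e : cs_J v2 + cs_J v2 = z - stB z.
    by rewrite sz /z opprB [RHS]addrC addrA subrK.
  have := ler_normB z (stB z); rewrite -e norm_star norm_double norm_J; lra.
have ek : f k + f k = mB v2 v2 - mB v1 v1.
  rewrite ev1 ev2 -fB; try (apply: DB => //; exact: DN).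
  rewrite -fD //; congr f.
  by rewrite opprK opprB [RHS]addrC addrA subrK.
have : `|f k + f k| <= `|v2| ^+ 2 + `|v1| ^+ 2.
  rewrite ek; apply: le_trans (ler_normB _ _) _.
  by apply: lerD; rewrite expr2; exact: norm_mul.
rewrite norm_double.
have n1 : 0 <= `|v1| by [].
have n2 : 0 <= `|v2| by [].
have z0 : 0 <= `|z| by [].
nra.
Qed.

Lemma bound_gen w : D w -> `|f w| <= 2 * `|w|.
Proof.
move=> Dw.
have [->|w0] := eqVneq w 0.
  by have := fB Dw Dw; rewrite subrr => ->; rewrite subrr normr0 normr0 mulr0.
have t0 : 0 < `|w| by rewrite normr_gt0.
set t := `|w| in t0 *.
set c : R := (2 * t ^+ 2)^-1.
have c0 : 0 < c by rewrite invr_gt0 mulr_gt0 // exprn_gt0.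
set k := c *: mA (stA w) w.
have Dk : D k by apply: DR; apply: DM => //; exact: DS.
have sk : stA k = k by rewrite /k cs_starZ cs_starM cs_starK.
have nk : `|k| = 2^-1.
  rewrite /k normrZ gtr0_norm // cs_Cstar -/t /c; field.
  by rewrite gt_eqF.
have nk2 : `|k| <= 2^-1 by rewrite nk.
have hb := bound_sa Dk sk nk2.
rewrite /k fR in hb; last by apply: DM => //; exact: DS.
rewrite fM in hb; [|exact: DS|done].
rewrite fS // normrZ gtr0_norm // cs_Cstar in hb.
have e : `|f w| ^+ 2 = (2 * t ^+ 2) * (c * `|f w| ^+ 2).
  by rewrite /c mulrA mulfV ?mul1r // mulf_neq0 // expf_neq0 // gt_eqF.
have h : `|f w| ^+ 2 <= (2 * t) ^+ 2.
  rewrite e; apply: le_trans (ler_wpM2l _ hb) _.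
    by rewrite mulr_ge0 // exprn_ge0 // ltW.
  by rewrite exprMn; lra.
rewrite -(ler_pXn2r (n := 2)) //; rewrite nnegrE //; apply: mulr_ge0 => //; exact: ltW.
Qed.
End Bound.

Lemma S1_conj (R : realType) (l : R[i]) : S1 l -> conjc l * l = 1.
Proof.
case: l => a b; rewrite /S1 /cabs /= => h.
have h0 : 0 <= a ^+ 2 + b ^+ 2 by rewrite addr_ge0 // sqr_ge0.
have h2 : a ^+ 2 + b ^+ 2 = 1.
  by have := sqr_sqrtr h0; rewrite h expr1n.
change ((a * a - (- b) * b) +i* (a * b + (- b) * a) = 1 +i* 0)%C.
congr (_ +i* _)%C.
  by rewrite GRing.mulNr opprK -!expr2.
by rewrite GRing.mulNr [b * a]mulrC subrr.
Qed.

Lemma S1_neq0 (R : realType) (l : R[i]) : S1 l -> l != 0.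
Proof.
move=> h; apply/eqP => l0; have := S1_conj h; rewrite l0 mulr0 => /eqP.
by rewrite eq_sym oner_eq0.
Qed.

Section Spec.
Variables (R : realType) (A : CstarAlgebra R) (sigma : R[i] -> A -> A).
Hypothesis hs : strongly_continuous_circle_action sigma.
Local Notation m := (@cs_mul R A).
Local Notation st := (@cs_star R A).
Local Notation A0 := (spectral_subspace sigma 0).

Lemma sig_hom l : S1 l -> is_unital_star_hom_on setT (sigma l).
Proof. by case: hs => h _ _ _; exact: h. Qed.

Lemma sigD l x y : S1 l -> sigma l (x + y) = sigma l x + sigma l y.
Proof. by move=> /sig_hom [h _ _ _ _]; exact: h. Qed.
Lemma sigC l c x : S1 l -> sigma l (cscale c x) = cscale c (sigma l x).
Proof. by move=> /sig_hom [_ h _ _ _]; exact: h. Qed.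
Lemma sigM l x y : S1 l -> sigma l (m x y) = m (sigma l x) (sigma l y).
Proof. by move=> /sig_hom [_ _ h _ _]; exact: h. Qed.
Lemma sigS l x : S1 l -> sigma l (st x) = st (sigma l x).
Proof. by move=> /sig_hom [_ _ _ h _]; exact: h. Qed.
Lemma sig1 l : S1 l -> sigma l (cs_one A) = cs_one A.
Proof. by move=> /sig_hom [_ _ _ _ h]. Qed.
Lemma sigR l (r : R) x : S1 l -> sigma l (r *: x) = r *: sigma l x.
Proof. by move=> hl; rewrite -!cscale_real sigC. Qed.


Lemma sig_bound l x : S1 l -> `|sigma l x| <= 2 * `|x|.
Proof.
move=> hl; apply: (bound_gen (D := setT)) => //; exact: sig_hom.
Qed.

Lemma A0P x : A0 x <-> forall l, S1 l -> sigma l x = x.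
Proof.
rewrite /spectral_subspace /=; split => h l hl; [move: (h l hl) | rewrite (h l hl)];
  by rewrite scale1r scale0r addr0.
Qed.

Lemma A0_1 : A0 (cs_one A).
Proof. by apply/A0P => l hl; rewrite sig1. Qed.
Lemma A0_D x y : A0 x -> A0 y -> A0 (x + y).
Proof. by move=> /A0P hx /A0P hy; apply/A0P => l hl; rewrite sigD // hx // hy. Qed.
Lemma A0_C c x : A0 x -> A0 (cscale c x).
Proof. by move=> /A0P hx; apply/A0P => l hl; rewrite sigC // hx. Qed.
Lemma A0_M x y : A0 x -> A0 y -> A0 (m x y).
Proof. by move=> /A0P hx /A0P hy; apply/A0P => l hl; rewrite sigM // hx // hy. Qed.
Lemma A0_S x : A0 x -> A0 (st x).
Proof. by move=> /A0P hx; apply/A0P => l hl; rewrite sigS // hx. Qed.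
Lemma A0_sq k : `|k| <= 2^-1 -> st k = k -> A0 k -> A0 (sq k).
Proof.
move=> nk sk /A0P hk; apply/A0P => l hl.
apply: (sq_map nk (G := 2)) => //.
- by move=> x y; rewrite sigD.
- by move=> r x; rewrite sigR.
- by move=> x y; rewrite sigM.
- by move=> x; exact: sig_bound.
- exact: hk.
- exact: sig1.
Qed.

Lemma pi_bound (B : CstarAlgebra R) (pi : A -> B) :
  is_unital_star_hom_on A0 pi -> forall w, A0 w -> `|pi w| <= 2 * `|w|.
Proof.
move=> hpi w hw; apply: (bound_gen hpi) => //.
- exact: A0_1.
- exact: A0_D.
- exact: A0_C.
- exact: A0_M.
- exact: A0_S.
- exact: A0_sq.
Qed.

Lemma spec_down (p : nat) z x : spectral_subspace sigma 1 z ->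
  spectral_subspace sigma (p.+1)%:Z x -> spectral_subspace sigma p%:Z (m (st z) x).
Proof.
move=> hz hx l hl; rewrite sigM // sigS // hz // hx //.
rewrite cscale_star cscale_mull cscale_mulr cscale_comp.
congr cscale.
by rewrite expr1z -!exprnP exprS mulrA S1_conj // mul1r.
Qed.

Lemma spec_up (p : nat) z x : spectral_subspace sigma 1 z ->
  spectral_subspace sigma (- (p.+1)%:Z) x -> spectral_subspace sigma (- p%:Z) (m z x).
Proof.
move=> hz hx l hl; rewrite sigM // hz // hx //.
rewrite cscale_mull cscale_mulr cscale_comp.
congr cscale.
rewrite expr1z -!exprnN exprS invfM mulrA mulfV ?mul1r //; exact: S1_neq0.
Qed.
End Spec.

Section Beta.
Variables (R : realType) (A B : CstarAlgebra R) (cA : set A) (beta : A -> B).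
Hypotheses (hcA : is_unital_star_subalgebra cA) (hb : is_unital_alg_hom_on cA beta).
Local Notation m := (@cs_mul R A).
Local Notation mB := (@cs_mul R B).
Local Notation st := (@cs_star R A).

Lemma cA1 : cA (cs_one A). Proof. by case: hcA. Qed.
Lemma cAD x y : cA x -> cA y -> cA (x + y). Proof. by case: hcA => _ h _ _ _; exact: h. Qed.
Lemma cAC c x : cA x -> cA (cscale c x). Proof. by case: hcA => _ _ h _ _; exact: h. Qed.
Lemma cAM x y : cA x -> cA y -> cA (m x y). Proof. by case: hcA => _ _ _ h _; exact: h. Qed.
Lemma cAS x : cA x -> cA (st x). Proof. by case: hcA => _ _ _ _ h; exact: h. Qed.
Lemma cA0 : cA 0.
Proof.
have h : cA (cs_one A + (-1) *: cs_one A).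
  by apply: cAD; [exact: cA1 | rewrite -cscale_real; apply: cAC; exact: cA1].
by move: h; rewrite scaleN1r subrr.
Qed.

Lemma betaD x y : cA x -> cA y -> beta (x + y) = beta x + beta y.
Proof. by case: hb => h _ _ _; exact: h. Qed.
Lemma betaM x y : cA x -> cA y -> beta (m x y) = mB (beta x) (beta y).
Proof. by case: hb => _ _ h _; exact: h. Qed.
Lemma beta0 : beta 0 = 0.
Proof.
have := betaD cA0 cA0; rewrite addr0 => e.
by apply: (@addrI _ (beta 0)); rewrite addr0 -e.
Qed.

Lemma beta_sum (k : nat) (F : 'I_k -> A) : (forall j, cA (F j)) ->
  cA (\sum_(j < k) F j) /\ beta (\sum_(j < k) F j) = \sum_(j < k) beta (F j).
Proof.
elim: k F => [|k IH] F hF; first by rewrite !big_ord0 beta0; split => //; exact: cA0.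
rewrite !big_ord_recr /=.
have [h1 h2] := IH (fun j => F (widen_ord (leqnSn k) j)) (fun j => hF _).
split; first by apply: cAD.
by rewrite betaD // h2.
Qed.

Lemma mul_sum (k : nat) (F : 'I_k -> A) x :
  m (\sum_(j < k) F j) x = \sum_(j < k) m (F j) x.
Proof.
elim: k F => [|k IH] F; first by rewrite !big_ord0 mul0l.
by rewrite !big_ord_recr /= cs_mulDl IH.
Qed.

Lemma step_bound (k : nat) (a b : 'I_k -> A) (S : set A) (C : R) :
  0 <= C -> (forall j, cA (a j) /\ cA (b j)) ->
  \sum_(j < k) m (a j) (b j) = cs_one A ->
  (forall y, cA y -> S y -> `|beta y| <= C * `|y|) ->
  forall x, cA x -> (forall j, S (m (b j) x)) ->
  `|beta x| <= (C * \sum_(j < k) `|beta (a j)| * `|b j|) * `|x|.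
Proof.
move=> C0 hab hsum hS x hx hSx.
have ex : x = \sum_(j < k) m (a j) (m (b j) x).
  rewrite -{1}(cs_mul1l x) -hsum mul_sum.
  by apply: eq_bigr => j _; rewrite cs_mulA.
have hc : forall j, cA (m (a j) (m (b j) x)).
  move=> j; have [ha hb'] := hab j; apply: cAM => //; exact: cAM.
have [_ e] := beta_sum hc.
rewrite [X in beta X]ex e.
apply: le_trans (ler_norm_sum _ _ _) _.
rewrite mulr_sumr mulr_suml; apply: ler_sum => j _.
have [ha hb'] := hab j.
rewrite betaM //; last exact: cAM.
apply: le_trans (norm_mul _ _) _.
have h1 := hS _ (cAM hb' hx) (hSx j).
have h2 := norm_mul (b j) x.
have n1 : 0 <= `|beta (a j)| by [].
have n2 : 0 <= `|beta (m (b j) x)| by [].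
have n3 : 0 <= `|m (b j) x| by [].
have n4 : 0 <= `|b j| by [].
have n5 : 0 <= `|x| by [].
have h3 : `|beta (a j)| * `|beta (m (b j) x)| <= `|beta (a j)| * (C * `|m (b j) x|).
  by apply: ler_wpM2l.
apply: le_trans h3 _.
have h4 : C * `|m (b j) x| <= C * (`|b j| * `|x|) by apply: ler_wpM2l.
have h5 := ler_wpM2l n1 h4.
apply: le_trans h5 _.
by rewrite !mulrA [`|beta (a j)| * C]mulrC.
Qed.
End Beta.

Lemma pos_bound (R : realType) (A B : CstarAlgebra R)
  (sigma : R[i] -> A -> A) (cA : set A) (beta : A -> B) (pi : A -> B) :
  strongly_continuous_circle_action sigma ->
  is_unital_star_subalgebra cA -> is_unital_alg_hom_on cA beta ->
  is_unital_star_hom_on (spectral_subspace sigma 0) pi ->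
  (forall a, cA a -> spectral_subspace sigma 0 a -> pi a = beta a) ->
  (exists (k : nat) (zR : 'I_k -> A),
      (forall j, cA (zR j) /\ spectral_subspace sigma 1 (zR j)) /\
      \sum_(j < k) cs_mul (zR j) (cs_star (zR j)) = cs_one A) ->
  forall p : nat, exists C : R, 0 <= C /\
    forall x, cA x -> spectral_subspace sigma p%:Z x -> `|beta x| <= C * `|x|.
Proof.
move=> hs hcA hb hpi hpb [k [zR [hz hsum]]].
elim=> [|p [C [C0 hC]]].
  exists 2; split => // x hx hx0; rewrite -hpb //; exact: (pi_bound hs hpi).
exists (C * \sum_(j < k) `|beta (zR j)| * `|cs_star (zR j)|); split.
  by apply: mulr_ge0 => //; apply: sumr_ge0 => j _; apply: mulr_ge0.
move=> x hx hxp.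
apply: (step_bound hcA hb (S := spectral_subspace sigma p%:Z)) => //.
- by move=> j; have [h1 _] := hz j; split => //; exact: cAS.
- move=> j; have [_ h2] := hz j; exact: spec_down.
Qed.

Lemma neg_bound (R : realType) (A B : CstarAlgebra R)
  (sigma : R[i] -> A -> A) (cA : set A) (beta : A -> B) (pi : A -> B) :
  strongly_continuous_circle_action sigma ->
  is_unital_star_subalgebra cA -> is_unital_alg_hom_on cA beta ->
  is_unital_star_hom_on (spectral_subspace sigma 0) pi ->
  (forall a, cA a -> spectral_subspace sigma 0 a -> pi a = beta a) ->
  (exists (m : nat) (zL : 'I_m -> A),
      (forall j, cA (zL j) /\ spectral_subspace sigma 1 (zL j)) /\
      \sum_(j < m) cs_mul (cs_star (zL j)) (zL j) = cs_one A) ->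
  forall p : nat, exists C : R, 0 <= C /\
    forall x, cA x -> spectral_subspace sigma (- p%:Z) x -> `|beta x| <= C * `|x|.
Proof.
move=> hs hcA hb hpi hpb [k [zL [hz hsum]]].
elim=> [|p [C [C0 hC]]].
  exists 2; split => // x hx; rewrite oppr0 => hx0; rewrite -hpb //; exact: (pi_bound hs hpi).
exists (C * \sum_(j < k) `|beta (cs_star (zL j))| * `|zL j|); split.
  by apply: mulr_ge0 => //; apply: sumr_ge0 => j _; apply: mulr_ge0.
move=> x hx hxp.
apply: (step_bound hcA hb (S := spectral_subspace sigma (- p%:Z))) => //.
- by move=> j; have [h1 _] := hz j; split => //; exact: cAS.
- move=> j; have [_ h2] := hz j; exact: spec_up.
Qed.

Unset Implicit Arguments.

Theorem lemma5p3 (R : realType) (A B : CstarAlgebra R)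
  (sigma : R[i] -> A -> A) (cA : set A) (beta : A -> B) (L : A -> R) :
  strongly_continuous_circle_action sigma ->
  is_unital_star_subalgebra cA ->
  closure cA = setT ->
  is_unital_alg_hom_on cA beta ->
  is_slip_norm_on cA L ->
  (* (a) *)
  (forall a, cA a -> cA (P0 sigma a)) ->
  (exists (k : nat) (zR : 'I_k -> A),
      (forall j, cA (zR j) /\ spectral_subspace sigma 1 (zR j)) /\
      \sum_(j < k) cs_mul (zR j) (cs_star (zR j)) = cs_one A) ->
  (exists (m : nat) (zL : 'I_m -> A),
      (forall j, cA (zL j) /\ spectral_subspace sigma 1 (zL j)) /\
      \sum_(j < m) cs_mul (cs_star (zL j)) (zL j) = cs_one A) ->
  (* (b) *)
  (forall a b, cA a -> cA b ->
      L (cs_mul a b) <= L a * `|beta b| + `|beta_minus beta a| * L b) ->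
  (exists pi : A -> B,
      is_unital_star_hom_on (spectral_subspace sigma 0) pi /\
      (forall a, cA a -> spectral_subspace sigma 0 a -> pi a = beta a)) ->
  (* conclusion *)
  forall (n : int) (y : A), cA y -> spectral_subspace sigma n y ->
    exists Cy : R, 0 <= Cy /\
      forall x : A, cA x -> spectral_subspace sigma n x ->
        L (cs_mul (cs_star y) x) <= Cy * (L x + `|x|).
Proof.
move=> hs hcA _ hb hL _ hR hLz hLb [pi [hpi hpb]] n y hy _.
have [C [C0 hC]] : exists C : R, 0 <= C /\
    forall x, cA x -> spectral_subspace sigma n x -> `|beta x| <= C * `|x|.
  case: n => p.
    exact: (pos_bound hs hcA hb hpi hpb hR).
  rewrite NegzE; exact: (neg_bound hs hcA hb hpi hpb hLz).
case: hL => L0 _ _ _ Lst.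
set M := `|beta_minus beta (cs_star y)|.
exists (L y * C + M); split.
  apply: addr_ge0; last exact: normr_ge0.
  by apply: mulr_ge0 => //; exact: L0.
move=> x hx hxn.
have hsy : cA (cs_star y) := cAS hcA hy.
apply: le_trans (hLb _ _ hsy hx) _.
rewrite Lst // -/M.
have h1 := hC x hx hxn.
have Ly0 := L0 y hy.
have Lx0 := L0 x hx.
have M0 : 0 <= M by exact: normr_ge0.
have nx0 : 0 <= `|x| by [].
have nb0 : 0 <= `|beta x| by [].
have h2 : L y * `|beta x| <= L y * (C * `|x|) by apply: ler_wpM2l.
have p1 : 0 <= L y * C * L x by rewrite !mulr_ge0.
have p2 : 0 <= M * `|x| by rewrite mulr_ge0.
rewrite mulrDr !mulrDl.
rewrite mulrA in h2.
lra.
Qed.
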